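(* Let $D=pq$ with $p\neq q$ odd primes, let $r$ be a positive integer with $2rD$ square-free, and let $d$ be a (possibly negative) integer with $d\mid rD$. Let $C'_d$ be the curve $W^2=d-\frac{2rD}{d}Z^4$. Then: (1) $C'_d(\mathbb{Q}_2)\neq\emptyset$ if and only if $d-2rD/d\equiv1\pmod 8$ or $d\equiv1\pmod 8$; (2) for any prime $t\mid\frac{rD}{d}$, $C'_d(\mathbb{Q}_t)\neq\emptyset$ if and only if $\left(\frac{d}{t}\right)=1$; (3) for any prime $l\mid d$, $C'_d(\mathbb{Q}_l)\neq\emptyset$ if and only if $\left(\frac{-2rD/d}{l}\right)=1$.
   Context: $\left(\frac{\cdot}{\cdot}\right)$ denotes the Legendre symbol; $C'_d(\mathbb{Q}_v)$ denotes the set of $\mathbb{Q}_v$-points $(Z,W)$ of the affine curve. *)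

(* Defs.v *)
From HB Require Import structures.
From mathcomp Require Import all_boot all_order all_algebra.
Set Implicit Arguments. Unset Strict Implicit. Unset Printing Implicit Defensive.
Import Order.TTheory GRing.Theory Num.Theory.
Local Open Scope ring_scope.

Definition squarefree (n : nat) : Prop :=
  forall t : nat, prime t -> ~~ (t * t %| n)%N.

Definition legendre (a : int) (l : nat) : int :=
  if (l%:Z %| a)%Z then 0
  else if [exists x : 'I_l, ((x%:Z) ^+ 2 == a %[mod l%:Z])%Z] then 1 else -1.

(* The ring of l-adic integers Z_l is the inverse limit of Z/l^n Z; an
   element is represented by a coherent sequence of integer residues
   x n (taken mod l^n), i.e. x (n+1) = x n mod l^n. *)
Definition coherent (l : nat) (x : nat -> int) : Prop :=
  forall n : nat, (x n.+1 = x n %[mod (l ^ n)%:Z])%Z.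

(* Q_l = Z_l[1/l]: every element of Q_l is l^{-a} z with z in Z_l.
   A Q_l-point (Z, W) = (l^{-a} z, l^{-b} w) of the affine curve
   W^2 = d - e Z^4 is, after multiplying by the unit l^{4a+2b}, an identity
       l^{4a} w^2 = d l^{4a+2b} - e l^{2b} z^4     in Z_l,
   and an identity in the inverse limit holds iff it holds modulo every l^n. *)
Definition Ql_point (l : nat) (d e : int) : Prop :=
  exists (a b : nat) (z w : nat -> int),
    [/\ coherent l z, coherent l w &
      forall n : nat,
        ((l ^ (4 * a))%:Z * w n ^+ 2 =
           d * (l ^ (4 * a + 2 * b))%:Z - e * (l ^ (2 * b))%:Z * z n ^+ 4
           %[mod (l ^ n)%:Z])%Z].

Definition Cd_has_Ql_point (r D : nat) (d : int) (l : nat) : Prop :=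
  Ql_point l d ((2 * r * D)%:Z %/ d)%Z.

(* Main.v *)
Require Import Defs.
From HB Require Import structures.
From mathcomp Require Import all_boot all_order all_algebra ring zify.
Import Order.TTheory GRing.Theory Num.Theory.
From Stdlib Require Import ClassicalEpsilon.
Import Order.TTheory GRing.Theory Num.Theory.
Local Open Scope ring_scope.

Lemma PoszXn (t n : nat) : ((t ^ n)%N%:Z) = (t%:Z) ^+ n.
Proof. by elim: n => [|n IH] //; rewrite expnS PoszM IH exprS. Qed.

Lemma euclidz (t : nat) (a b : int) : prime t ->
  (t%:Z %| a * b)%Z = (t%:Z %| a)%Z || (t%:Z %| b)%Z.
Proof. by move=> pt; rewrite !dvdzE abszM Euclid_dvdM. Qed.

Lemma euclidzX (t : nat) (a : int) n : prime t -> (0 < n)%N ->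
  (t%:Z %| a ^+ n)%Z = (t%:Z %| a)%Z.
Proof.
move=> pt; elim: n => // -[|n] IH _; first by rewrite expr1.
by rewrite exprS euclidz // IH // orbb.
Qed.

Lemma decomp (t : nat) (z : int) : prime t -> z != 0 ->
  exists v z', z = (t%:Z) ^+ v * z' /\ ~~ (t%:Z %| z')%Z.
Proof.
move=> pt z0.
have [m cm hm] := pfactor_coprime pt (eq_ind_r is_true z0 (absz_gt0 z)).
exists (logn t `|z|), ((-1) ^+ (z < 0)%R * m%:Z); split.
  by rewrite mulrCA -PoszXn -PoszM mulnC -hm mulz_sign_abs.
by rewrite dvdzE abszMsign /= -prime_coprime.
Qed.

Lemma key (t k N : nat) (x u : int) : prime t -> (k < N)%N ->
  (t%:Z ^+ N %| x ^+ 2 - t%:Z ^+ k * u)%Z -> ~~ (t%:Z %| u)%Z ->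
  ~~ odd k /\ exists x', (t%:Z ^+ (N - k) %| x' ^+ 2 - u)%Z.
Proof.
move=> pt kN H nu.
have T0 : t%:Z != 0 by rewrite eqz_nat -lt0n prime_gt0.
have Tk0 : forall j, t%:Z ^+ j != 0 by move=> j; rewrite expf_neq0.
have divk1 : (t%:Z ^+ k.+1 %| t%:Z ^+ k * u)%Z -> False.
  by rewrite exprSr dvdz_mul2l // (negbTE nu).
have [x0e|x0] := eqVneq x 0.
  exfalso; apply: divk1; rewrite x0e in H.
  have := dvdz_trans (dvdz_exp2l _ kN) H.
  by rewrite expr0n /= sub0r rpredN.
have [v [x' [xe nx']]] := @decomp t x pt x0; rewrite xe in H.
have sq : (t%:Z ^+ v * x') ^+ 2 = t%:Z ^+ (v.*2) * x' ^+ 2.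
  by rewrite exprMn -exprM muln2.
rewrite sq in H.
have [lt|gt|eq] := ltngtP v.*2 k.
- exfalso.
  have h1 : (t%:Z ^+ (v.*2).+1 %| t%:Z ^+ N)%Z by apply: dvdz_exp2l; apply: ltn_trans kN.
  have h2 : (t%:Z ^+ (v.*2).+1 %| t%:Z ^+ k * u)%Z by apply: dvdz_mulr; exact: dvdz_exp2l.
  have h3 : (t%:Z ^+ (v.*2).+1 %| t%:Z ^+ (v.*2) * x' ^+ 2)%Z.
    have := rpredD (dvdz_trans h1 H) h2.
    by rewrite subrK.
  by move: h3; rewrite [t%:Z ^+ (v.*2).+1]exprSr dvdz_mul2l // euclidzX // (negbTE nx').
- exfalso; apply: divk1.
  have h1 : (t%:Z ^+ k.+1 %| t%:Z ^+ N)%Z by apply: dvdz_exp2l.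
  have h2 : (t%:Z ^+ k.+1 %| t%:Z ^+ (v.*2) * x' ^+ 2)%Z by apply: dvdz_mulr; exact: dvdz_exp2l.
  have := rpredB h2 (dvdz_trans h1 H).
  by rewrite opprB addrC subrK.
- subst k; split; first by rewrite odd_double.
  exists x'.
  have eN : N = (v.*2 + (N - v.*2))%N by rewrite subnKC // ltnW.
  by move: H; rewrite {1}eN exprD -mulrBr dvdz_mul2l.
Qed.

Lemma key2 (t N a k : nat) (w R u : int) : prime t -> (k < N)%N ->
  (t%:Z ^+ N %| t%:Z ^+ (4 * a)%N * w ^+ 2 - R)%Z -> R = t%:Z ^+ k * u ->
  ~~ (t%:Z %| u)%Z ->
  ~~ odd k /\ exists x', (t%:Z ^+ (N - k) %| x' ^+ 2 - u)%Z.
Proof.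
move=> pt kN H Re nu; apply: (@key t k N (t%:Z ^+ (2 * a)%N * w)) => //.
by rewrite exprMn -exprM -Re (_ : (2 * a * 2 = 4 * a)%N) // mulnAC.
Qed.

Lemma dvdT (t m : nat) : (0 < m)%N -> (t%:Z %| t%:Z ^+ m)%Z.
Proof. by move=> m0; have := dvdz_exp2l (t%:Z) m0; rewrite expr1. Qed.

Lemma nL1 m : (m < m + 3)%N. Proof. lia. Qed.
Lemma nL2 j : (0 < 4 * j + 1)%N. Proof. lia. Qed.
Lemma nL3 j : (0 < 4 * j + 3)%N. Proof. lia. Qed.
Lemma nL4 m : (0 < m + 3 - m)%N. Proof. lia. Qed.
Lemma nL5 a be : (a <= be)%N -> exists j, be = (a + j)%N.
Proof. by move=> h; exists (be - a)%N; lia. Qed.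
Lemma nL6 a be : (be < a)%N -> exists j, a = (be + j + 1)%N.
Proof. by move=> h; exists (a - be - 1)%N; lia. Qed.
Lemma nL7 b be j : (2 * b + 4 * be + 1 < 4 * (be + j + 1) + 2 * b + 3)%N.
Proof. lia. Qed.

Lemma nL8 m : (m + 1 < m + 3)%N. Proof. lia. Qed.
Lemma nL9 b be j : (2 * b + 4 * be < 4 * (be + j) + 2 * b + 3)%N. Proof. lia. Qed.

Lemma nec_gen (t a b : nat) (d e' z w : int) : prime t ->
  ~~ (t%:Z %| d)%Z -> ~~ (t%:Z %| e')%Z ->
  (t%:Z ^+ (4 * a + 2 * b + 3)%N %| t%:Z ^+ (4 * a)%N * w ^+ 2 -
     (d * t%:Z ^+ (4 * a + 2 * b)%N - t%:Z * e' * t%:Z ^+ (2 * b)%N * z ^+ 4))%Z ->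
  (exists x, (t%:Z ^+ 3 %| x ^+ 2 - d)%Z) \/
  (exists x j z', ~~ (t%:Z %| z')%Z /\ (t%:Z ^+ 3 %| x ^+ 2 - (d - e' * t%:Z ^+ (4 * j + 1)%N * z' ^+ 4))%Z).
Proof.
move=> pt nd ne H.
set T := t%:Z in nd ne H *.
have T0 : T != 0 by rewrite eqz_nat -lt0n prime_gt0.
have [z0|z0] := eqVneq z 0.
  have kN := nL1 (4 * a + 2 * b).
  have Re : d * T ^+ (4 * a + 2 * b)%N - T * e' * T ^+ (2 * b)%N * z ^+ 4 = T ^+ (4 * a + 2 * b)%N * d.
    by rewrite (_ : z ^+ 4 = 0); [rewrite mulr0 subr0 mulrC | rewrite z0 expr0n].
  have [_ [x hx]] := @key2 t _ _ _ _ _ _ pt kN H Re nd.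
  by left; exists x; rewrite addKn in hx.
have [be [z' [ze nz']]] := @decomp t z pt z0.
rewrite ze in H.
have [le|lt] := leqP a be.
  have [j ej] := nL5 _ _ le.
  rewrite ej in H.
  set u := d - e' * T ^+ (4 * j + 1)%N * z' ^+ 4.
  have nu : ~~ (T %| u)%Z.
    apply: contra nd => hu.
    have -> : d = u + e' * T ^+ (4 * j + 1)%N * z' ^+ 4 by rewrite /u subrK.
    by rewrite rpredD // dvdz_mulr // dvdz_mull // dvdT // nL2.
  have kN := nL1 (4 * a + 2 * b).
  have Re : d * T ^+ (4 * a + 2 * b)%N - T * e' * T ^+ (2 * b)%N * (T ^+ (a + j)%N * z') ^+ 4 = T ^+ (4 * a + 2 * b)%N * u.
    by rewrite /u !exprD; ring.
  have [_ [x hx]] := @key2 t _ _ _ _ _ _ pt kN H Re nu.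
  rewrite addKn in hx.
  right; exists x, j, z'; split; [exact: nz' | exact: hx].
have [j ej] := nL6 _ _ lt.
rewrite ej in H.
set u := d * T ^+ (4 * j + 3)%N - e' * z' ^+ 4.
have nu : ~~ (T %| u)%Z.
  apply/negP => hu.
  have : (T %| e' * z' ^+ 4)%Z.
    have -> : e' * z' ^+ 4 = d * T ^+ (4 * j + 3)%N - u by rewrite /u; ring.
    by rewrite rpredB // dvdz_mull // dvdT // nL3.
  by rewrite euclidz // euclidzX // (negbTE ne) (negbTE nz').
have kN := nL7 b be j.
have Re : d * T ^+ (4 * (be + j + 1) + 2 * b)%N - T * e' * T ^+ (2 * b)%N * (T ^+ be * z') ^+ 4 = T ^+ (2 * b + 4 * be + 1)%N * u.
  by rewrite /u !exprD; ring.
have [] := @key2 t _ _ _ _ _ _ pt kN H Re nu.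
by rewrite !oddD; case: (odd b); case: (odd be).
Qed.

Lemma nec_t (t a b : nat) (d e' z w : int) : prime t ->
  ~~ (t%:Z %| d)%Z -> ~~ (t%:Z %| e')%Z ->
  (t%:Z ^+ (4 * a + 2 * b + 3)%N %| t%:Z ^+ (4 * a)%N * w ^+ 2 -
     (d * t%:Z ^+ (4 * a + 2 * b)%N - t%:Z * e' * t%:Z ^+ (2 * b)%N * z ^+ 4))%Z ->
  exists x, (t%:Z %| x ^+ 2 - d)%Z.
Proof.
move=> pt nd ne H.
have T3 : (t%:Z %| t%:Z ^+ 3)%Z by apply: dvdT.
case: (@nec_gen t a b d e' z w pt nd ne H) => [[x hx]|[x [j [z' [nz hx]]]]].
  by exists x; apply: dvdz_trans hx.
exists x.
have -> : x ^+ 2 - d = (x ^+ 2 - (d - e' * t%:Z ^+ (4 * j + 1)%N * z' ^+ 4)) - e' * t%:Z ^+ (4 * j + 1)%N * z' ^+ 4 by ring.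
rewrite rpredB //; first exact: dvdz_trans hx.
by rewrite dvdz_mulr // dvdz_mull // dvdT // nL2.
Qed.

Lemma odd8 (x : int) : ~~ (2 %| x)%Z -> (8 %| x ^+ 2 - 1)%Z.
Proof.
move=> nx.
have hx := divz_eq x 2.
have r0 := @modz_ge0 x 2 isT.
have r1 := @ltz_pmod x 2 isT.
have rn : (x %% 2)%Z != 0 by apply: contra nx => /eqP h; apply/dvdz_mod0P.
have r1e : (x %% 2)%Z = 1 by move: r0 r1 rn; set r := (x %% 2)%Z; move=> *; lia.
rewrite r1e in hx.
move: hx; set m := (x %/ 2)%Z => hx.
have hm := divz_eq m 2.
have s0 := @modz_ge0 m 2 isT.
have s1 := @ltz_pmod m 2 isT.
have [s|s] : (m %% 2)%Z = 0 \/ (m %% 2)%Z = 1 by move: s0 s1; set r := (m %% 2)%Z; move=> *; lia.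
- move: hm hx; rewrite s; move: (m %/ 2)%Z => n -> ->.
  by apply/dvdzP; exists (n * (2 * n + 1)); ring.
- move: hm hx; rewrite s; move: (m %/ 2)%Z => n -> ->.
  by apply/dvdzP; exists ((2 * n + 1) * (n + 1)); ring.
Qed.

Lemma sq8 (x u : int) : ~~ (2 %| u)%Z -> (2 ^+ 3 %| x ^+ 2 - u)%Z -> (8 %| u - 1)%Z.
Proof.
move=> nu h.
have nx : ~~ (2 %| x)%Z.
  apply: contra nu => hx.
  have h2 : (2 %| x ^+ 2 - u)%Z by apply: dvdz_trans h; apply: (@dvdT 2 3).
  have -> : u = x ^+ 2 - (x ^+ 2 - u) by ring.
  by rewrite rpredB // dvdz_exp.
have -> : u - 1 = (x ^+ 2 - 1) - (x ^+ 2 - u) by ring.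
by rewrite rpredB // odd8.
Qed.

Lemma nec_2 (a b : nat) (d e' z w : int) :
  ~~ (2 %| d)%Z -> ~~ (2 %| e')%Z ->
  (2 ^+ (4 * a + 2 * b + 3)%N %| 2 ^+ (4 * a)%N * w ^+ 2 -
     (d * 2 ^+ (4 * a + 2 * b)%N - 2 * e' * 2 ^+ (2 * b)%N * z ^+ 4))%Z ->
  (8 %| d - 2 * e' - 1)%Z \/ (8 %| d - 1)%Z.
Proof.
move=> nd ne H.
case: (@nec_gen 2 a b d e' z w isT nd ne H) => [[x hx]|[x [j [z' [nz hx]]]]].
  by right; apply: (@sq8 x d nd hx).
set u := d - e' * 2 ^+ (4 * j + 1)%N * z' ^+ 4 in hx.
have nu : ~~ (2 %| u)%Z.
  apply: contra nd => hu.
  have -> : d = u + e' * 2 ^+ (4 * j + 1)%N * z' ^+ 4 by rewrite /u subrK.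
  by rewrite rpredD // dvdz_mulr // dvdz_mull // (@dvdT 2) // nL2.
have h8 := @sq8 x u nu hx.
case: j @u h8 {hx nu} => [|j] u h8.
  left.
  have z8 := @odd8 z' nz.
  have -> : d - 2 * e' - 1 = (u - 1) + 2 * e' * (z' ^+ 2 + 1) * (z' ^+ 2 - 1) by rewrite /u; ring.
  by rewrite rpredD // dvdz_mull.
right.
have -> : d - 1 = (u - 1) + e' * 2 ^+ 3 * (2 ^+ (4 * j + 2)%N * z' ^+ 4).
  by rewrite /u (_ : (4 * j.+1 + 1 = 3 + (4 * j + 2))%N) ?exprD; [ring | lia].
by rewrite rpredD // dvdz_mulr // dvdz_mull.
Qed.

Lemma nL11 m : (m + 1 < m + 3)%N. Proof. lia. Qed.
Lemma nL12 a b : (4 * a + 2 * b + 1 < 4 * a + 2 * b + 3)%N. Proof. lia. Qed.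

Lemma nec_l (l a b : nat) (d' e z w : int) : prime l ->
  ~~ (l%:Z %| d')%Z -> ~~ (l%:Z %| e)%Z ->
  (l%:Z ^+ (4 * a + 2 * b + 3)%N %| l%:Z ^+ (4 * a)%N * w ^+ 2 -
     (l%:Z * d' * l%:Z ^+ (4 * a + 2 * b)%N - e * l%:Z ^+ (2 * b)%N * z ^+ 4))%Z ->
  exists x s, ~~ (l%:Z %| s)%Z /\ (l%:Z %| x ^+ 2 + e * s ^+ 2)%Z.
Proof.
move=> pt nd ne H.
set T := l%:Z in nd ne H *.
have T0 : T != 0 by rewrite eqz_nat -lt0n prime_gt0.
have oddk : odd (4 * a + 2 * b + 1)%N.
  by rewrite !oddD; case: (odd a); case: (odd b).
have [z0|z0] := eqVneq z 0.
  have kN := nL11 (4 * a + 2 * b).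
  have Re : T * d' * T ^+ (4 * a + 2 * b)%N - e * T ^+ (2 * b)%N * z ^+ 4 = T ^+ (4 * a + 2 * b + 1)%N * d'.
    rewrite (_ : z ^+ 4 = 0); last by rewrite z0 expr0n.
    by rewrite mulr0 subr0 !exprD; ring.
  have [] := @key2 l _ _ _ _ _ _ pt kN H Re nd.
  by rewrite oddk.
have [be [z' [ze nz']]] := @decomp l z pt z0.
rewrite ze in H.
have [le|lt] := leqP be a.
  have [j ej] := nL5 _ _ le.
  rewrite ej in H.
  set u := d' * T ^+ (4 * j + 1)%N - e * z' ^+ 4.
  have nu : ~~ (T %| u)%Z.
    apply/negP => hu.
    have : (T %| e * z' ^+ 4)%Z.
      have -> : e * z' ^+ 4 = d' * T ^+ (4 * j + 1)%N - u by rewrite /u; ring.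
      by rewrite rpredB // dvdz_mull // dvdT // nL2.
    by rewrite euclidz // euclidzX // (negbTE ne) (negbTE nz').
  have kN := nL9 b be j.
  have Re : T * d' * T ^+ (4 * (be + j) + 2 * b)%N - e * T ^+ (2 * b)%N * (T ^+ be * z') ^+ 4 = T ^+ (2 * b + 4 * be)%N * u.
    by rewrite /u !exprD; ring.
  have [_ [x hx]] := @key2 l _ _ _ _ _ _ pt kN H Re nu.
  exists x, (z' ^+ 2); split; first by rewrite euclidzX.
  have -> : x ^+ 2 + e * (z' ^+ 2) ^+ 2 = (x ^+ 2 - u) + d' * T ^+ (4 * j + 1)%N by rewrite /u; ring.
  rewrite rpredD //; last by rewrite dvdz_mull // dvdT // nL2.
  by apply: dvdz_trans hx; apply: dvdT; rewrite subn_gt0.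
have [j ej] := nL6 _ _ lt.
rewrite ej in H.
set u := d' - e * T ^+ (4 * j + 3)%N * z' ^+ 4.
have nu : ~~ (T %| u)%Z.
  apply: contra nd => hu.
  have -> : d' = u + e * T ^+ (4 * j + 3)%N * z' ^+ 4 by rewrite /u subrK.
  by rewrite rpredD // dvdz_mulr // dvdz_mull // dvdT // nL3.
have kN := nL11 (4 * a + 2 * b).
have Re : T * d' * T ^+ (4 * a + 2 * b)%N - e * T ^+ (2 * b)%N * (T ^+ (a + j + 1)%N * z') ^+ 4 = T ^+ (4 * a + 2 * b + 1)%N * u.
  by rewrite /u !exprD; ring.
have [] := @key2 l _ _ _ _ _ _ pt kN H Re nu.
by rewrite oddk.
Qed.

Lemma dep_seq (P : nat -> int -> Prop) (R : nat -> int -> int -> Prop) (x0 : int) :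
  P 0%N x0 -> (forall n x, P n x -> exists y, P n.+1 y /\ R n x y) ->
  exists f : nat -> int, forall n, P n (f n) /\ R n (f n) (f n.+1).
Proof.
move=> P0 step.
pose st n x := epsilon (inhabits (0 : int)) (fun y => P n.+1 y /\ R n x y).
pose f := fix f n := match n with 0%N => x0 | n'.+1 => st n' (f n') end.
have hP : forall n, P n (f n).
  elim=> [//|n IH] /=.
  exact: (proj1 (epsilon_spec _ _ (step n (f n) IH))).
exists f => n; split => //.
exact: (proj2 (epsilon_spec _ _ (step n (f n) (hP n)))).
Qed.

Lemma hensel_odd (l : nat) (c x0 : int) : prime l -> odd l -> ~~ (l%:Z %| c)%Z ->
  (l%:Z %| x0 ^+ 2 - c)%Z ->
  exists w : nat -> int, forall n, (l%:Z ^+ n %| w n ^+ 2 - c)%Z /\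
                           (l%:Z ^+ n %| w n.+1 - w n)%Z.
Proof.
move=> pl ol nc h0.
set L := l%:Z in nc h0 *.
have L0 : L != 0 by rewrite eqz_nat -lt0n prime_gt0.
have P0 : (L ^+ 1 %| x0 ^+ 2 - c)%Z by rewrite expr1.
have step : forall n x, (L ^+ n.+1 %| x ^+ 2 - c)%Z -> exists y,
    (L ^+ n.+2 %| y ^+ 2 - c)%Z /\ (L ^+ n.+1 %| y - x)%Z.
  move=> n x hx.
  have nx : ~~ (L %| x)%Z.
    apply: contra nc => hx'.
    have -> : c = x ^+ 2 - (x ^+ 2 - c) by ring.
    rewrite rpredB //; first by rewrite dvdz_exp.
    by apply: dvdz_trans hx; apply: dvdT.
  have cop : coprimez (2 * x) L.
    rewrite coprimez_sym coprimezE prime_coprime //.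
    rewrite -dvdzE euclidz // negb_or nx andbT dvdzE /=.
    by rewrite dvdn_prime2 //; apply: contraL ol => /eqP ->.
  have [u [v huv]] := Bezoutz (2 * x) L.
  move: cop; rewrite /coprimez => /eqP cop; rewrite cop in huv.
  have [j hj] := dvdzP hx.
  exists (x - j * u * L ^+ n.+1); split.
    apply/dvdzP; exists (j * v + (j * u) ^+ 2 * L ^+ n).
    have -> : c = x ^+ 2 - j * L ^+ n.+1 by rewrite -hj; ring.
    apply/eqP; rewrite -subr_eq0; apply/eqP.
    transitivity (j * L ^+ n.+1 * (1 - (u * (2 * x) + v * L))).
      by rewrite !exprS; ring.
    by rewrite huv subrr mulr0.
  by rewrite (_ : _ - x = - (j * u) * L ^+ n.+1) ?dvdz_mull //; ring.
have [f hf] := @dep_seq (fun n x => (L ^+ n.+1 %| x ^+ 2 - c)%Z)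
   (fun n x y => (L ^+ n.+1 %| y - x)%Z) x0 P0 step.
exists f => n; have [h1 h2] := hf n; split.
  by apply: dvdz_trans h1; apply: dvdz_exp2l.
by apply: dvdz_trans h2; apply: dvdz_exp2l.
Qed.

Lemma oddE (x : int) : ~~ (2 %| x)%Z -> exists q, x = 2 * q + 1.
Proof.
move=> nx.
have hx := divz_eq x 2.
have r0 := @modz_ge0 x 2 isT.
have r1 := @ltz_pmod x 2 isT.
have rn : (x %% 2)%Z != 0 by apply: contra nx => /eqP h; apply/dvdz_mod0P.
have r1e : (x %% 2)%Z = 1 by move: r0 r1 rn; set r := (x %% 2)%Z; move=> *; lia.
by exists (x %/ 2)%Z; rewrite {1}hx r1e mulrC.
Qed.

Lemma hensel_2 (c : int) : (8 %| c - 1)%Z ->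
  exists w : nat -> int, forall n, (2 ^+ n %| w n ^+ 2 - c)%Z /\
                           (2 ^+ n %| w n.+1 - w n)%Z.
Proof.
move=> h0.
have P0 : (2 ^+ 3 %| 1 ^+ 2 - c)%Z /\ ~~ (2 %| 1)%Z.
  by split => //; rewrite expr1n -opprB rpredN.
have step : forall n x, (2 ^+ n.+3 %| x ^+ 2 - c)%Z /\ ~~ (2 %| x)%Z -> exists y,
    ((2 ^+ n.+4 %| y ^+ 2 - c)%Z /\ ~~ (2 %| y)%Z) /\ (2 ^+ n.+2 %| y - x)%Z.
  move=> n x [hx nx].
  have [j hj] := dvdzP hx.
  have [q hq] := @oddE x nx.
  exists (x - j * 2 ^+ n.+2); split; first split.
  - apply/dvdzP; exists (- j * q + j ^+ 2 * 2 ^+ n).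
    have -> : c = x ^+ 2 - j * 2 ^+ n.+3 by rewrite -hj; ring.
    by rewrite hq !exprS; ring.
  - apply: contra nx => hy.
    have -> : x = (x - j * 2 ^+ n.+2) + j * 2 ^+ n.+2 by ring.
    by rewrite rpredD // dvdz_mull // (@dvdT 2).
  - have -> : x - j * 2 ^+ n.+2 - x = (- j) * 2 ^+ n.+2 by ring.
    by rewrite dvdz_mull.
have [f hf] := @dep_seq (fun n x => (2 ^+ n.+3 %| x ^+ 2 - c)%Z /\ ~~ (2 %| x)%Z)
   (fun n x y => (2 ^+ n.+2 %| y - x)%Z) 1 P0 step.
exists f => n; have [[h1 _] h2] := hf n; split.
  apply: dvdz_trans h1; apply: dvdz_exp2l; by rewrite -addn3 leq_addr.
apply: dvdz_trans h2; apply: dvdz_exp2l; by rewrite -addn2 leq_addr.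
Qed.

Lemma suff_point (l a b : nat) (d e z0 c : int) :
  (exists w : nat -> int, forall n, (l%:Z ^+ n %| w n ^+ 2 - c)%Z /\
                           (l%:Z ^+ n %| w n.+1 - w n)%Z) ->
  l%:Z ^+ (4 * a)%N * c = d * l%:Z ^+ (4 * a + 2 * b)%N - e * l%:Z ^+ (2 * b)%N * z0 ^+ 4 ->
  Ql_point l d e.
Proof.
move=> [w hw] hc; exists a, b, (fun _ => z0), w; split.
- by move=> n.
- move=> n; apply/eqP; rewrite eqz_mod_dvd PoszXn; exact: (proj2 (hw n)).
- move=> n; apply/eqP; rewrite eqz_mod_dvd !PoszXn -hc -mulrBr dvdz_mull //.
  exact: (proj1 (hw n)).
Qed.

Lemma point_dvd (l : nat) (d e : int) : Ql_point l d e ->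
  exists a b, forall N, exists z w,
  (l%:Z ^+ N %| l%:Z ^+ (4 * a)%N * w ^+ 2 -
     (d * l%:Z ^+ (4 * a + 2 * b)%N - e * l%:Z ^+ (2 * b)%N * z ^+ 4))%Z.
Proof.
move=> [a [b [z [w [_ _ h]]]]]; exists a, b => N; exists (z N), (w N).
by have := h N; move/eqP; rewrite eqz_mod_dvd !PoszXn.
Qed.

Lemma legendre1 (c : int) (l : nat) : prime l ->
  legendre c l = 1 <-> ~~ (l%:Z %| c)%Z /\ exists x, (l%:Z %| x ^+ 2 - c)%Z.
Proof.
move=> pl; rewrite /legendre.
have l0 : (0 < l)%N := prime_gt0 pl.
case: ifP => hc.
  by split => // -[].
case: ifP => hex.
  split => // _; split => //.
  move/existsP: hex => [x hx]; exists (nat_of_ord x)%:Z.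
  by rewrite -eqz_mod_dvd.
split => // -[_ [x hx]]; exfalso.
move/negbT: hex => /negP; apply; apply/existsP.
have m0 : 0 <= (x %% l%:Z)%Z by apply: modz_ge0; rewrite eqz_nat -lt0n.
have m1 : (x %% l%:Z)%Z < l%:Z by apply: ltz_pmod; rewrite ltz_nat.
have ab : ((absz (x %% l%:Z)%Z)%:Z = (x %% l%:Z)%Z) by rewrite abszE ger0_norm.
have lt : (absz (x %% l%:Z)%Z < l)%N by rewrite -ltz_nat ab.
exists (Ordinal lt) => /=.
rewrite ab eqz_mod_dvd.
have -> : (x %% l%:Z)%Z ^+ 2 - c = ((x %% l%:Z)%Z ^+ 2 - x ^+ 2) + (x ^+ 2 - c) by ring.
rewrite rpredD // -eqz_mod_dvd; apply/eqP; exact: modzXm.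
Qed.

Lemma QR_of (l : nat) (x s e : int) : prime l -> ~~ (l%:Z %| s)%Z ->
  (l%:Z %| x ^+ 2 + e * s ^+ 2)%Z -> exists y, (l%:Z %| y ^+ 2 + e)%Z.
Proof.
move=> pl ns h.
have cop : coprimez s l%:Z.
  by rewrite coprimez_sym coprimezE prime_coprime // -dvdzE.
have [u [v huv]] := Bezoutz s l%:Z.
move: cop; rewrite /coprimez => /eqP cop; rewrite cop in huv.
exists (x * u).
have -> : (x * u) ^+ 2 + e = u ^+ 2 * (x ^+ 2 + e * s ^+ 2) + e * v * l%:Z * (1 + u * s).
  apply/eqP; rewrite -subr_eq0; apply/eqP.
  transitivity (e * (1 + u * s) * (1 - (u * s + v * l%:Z))); first ring.
  by rewrite huv subrr mulr0.
by rewrite rpredD //; [apply: dvdz_mull | apply: dvdz_mulr; apply: dvdz_mull; exact: dvdzz].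
Qed.
Theorem lemma2p2 (p q r : nat) (d : int) :
  prime p -> prime q -> p != q -> odd p -> odd q ->
  (0 < r)%N -> squarefree (2 * r * (p * q)) ->
  (d %| (r * (p * q))%:Z)%Z ->
  let D := (p * q)%N in
  let e := ((2 * r * D)%:Z %/ d)%Z in
  [/\ (Cd_has_Ql_point r D d 2 <->
         ((d - e = 1 %[mod 8])%Z \/ (d = 1 %[mod 8])%Z)),
      (forall t : nat, prime t -> (t%:Z %| ((r * D)%:Z %/ d))%Z ->
         (Cd_has_Ql_point r D d t <-> legendre d t = 1)) &
      (forall l : nat, prime l -> (l%:Z %| d)%Z ->
         (Cd_has_Ql_point r D d l <-> legendre (- e) l = 1))].
Proof.
move=> pp pq npq op oq r0 sqf hd D e.
set n := (r * (p * q))%N in hd.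
have n0 : (0 < n)%N by rewrite /n !muln_gt0 r0 !prime_gt0.
have d0 : d != 0.
  by apply: contraTneq hd => ->; rewrite dvd0z eqz_nat -lt0n n0.
set f := ((n%:Z) %/ d)%Z.
have hf : f * d = n%:Z := divzK hd.
have he : e = 2 * f.
  by rewrite /e /D -mulnA PoszM /f mulz_divA.
have sq : forall t, prime t -> ~~ (t%:Z * t%:Z %| d * f)%Z.
  move=> t pt; rewrite mulrC hf dvdzE abszM /=.
  apply: contra (sqf t pt) => h; rewrite -mulnA; exact: dvdn_mull.
have n_odd : ~~ (2 %| n%:Z)%Z.
  rewrite dvdzE /=.
  apply: contra (sqf 2 isT) => h; rewrite -mulnA; exact: dvdn_mul (dvdnn 2) h.
have d_odd : ~~ (2 %| d)%Z by apply: contra n_odd => h; rewrite -hf; exact: dvdz_mull.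
have f_odd : ~~ (2 %| f)%Z by apply: contra n_odd => h; rewrite -hf; exact: dvdz_mulr.
split.
- change (Ql_point 2 d e <-> (d - e = 1 %[mod 8])%Z \/ (d = 1 %[mod 8])%Z).
  rewrite he; split.
    move/point_dvd => [a [b hN]]; have [z [w h]] := hN (4 * a + 2 * b + 3)%N.
    case: (@nec_2 a b d f z w d_odd f_odd h) => h8; [left|right];
      by apply/eqP; rewrite eqz_mod_dvd.
  case=> /eqP; rewrite eqz_mod_dvd => h8.
    apply: (@suff_point 2 0 0 d (2 * f) 1 (d - 2 * f) (@hensel_2 _ h8)).
    by rewrite !muln0 !addn0 !expr0 expr1n; ring.
  apply: (@suff_point 2 0 0 d (2 * f) 0 d (@hensel_2 _ h8)).
  by rewrite !muln0 !addn0 !expr0 expr0n /=; ring.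
- move=> t pt ht; change (is_true (t%:Z %| f)%Z) in ht.
  change (Ql_point t d e <-> legendre d t = 1).
  have ntd : ~~ (t%:Z %| d)%Z.
    by apply/negP => hd'; apply: (negP (sq t pt)); rewrite dvdz_mul.
  have t_odd : odd t.
    by case: (even_prime pt) => // t2; move: ht; rewrite t2 (negbTE f_odd).
  set g := (f %/ t%:Z)%Z.
  have hg : g * t%:Z = f := divzK ht.
  have ng : ~~ (t%:Z %| g)%Z.
    apply/negP => hg'; apply: (negP (sq t pt)); rewrite -hg.
    by apply: dvdz_mull; apply: dvdz_mul hg' (dvdzz _).
  have nt2 : ~~ (t%:Z %| 2)%Z.
    rewrite dvdzE /= dvdn_prime2 //; apply: contraL t_odd => /eqP -> //.
  have ne' : ~~ (t%:Z %| 2 * g)%Z by rewrite euclidz // negb_or nt2 ng.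
  have he' : e = t%:Z * (2 * g) by rewrite he -hg; ring.
  rewrite legendre1 //; split.
    move/point_dvd => [a [b hN]]; have [z [w h]] := hN (4 * a + 2 * b + 3)%N.
    rewrite he' in h.
    have [x hx] := @nec_t t a b d (2 * g) z w pt ntd ne' h.
    by split => //; exists x.
  move=> [_ [x0 hx0]].
  apply: (@suff_point t 0 0 d e 0 d (@hensel_odd t d x0 pt t_odd ntd hx0)).
  by rewrite !muln0 !addn0 !expr0 expr0n /=; ring.
- move=> l pl hl.
  change (Ql_point l d e <-> legendre (- e) l = 1).
  set d' := (d %/ l%:Z)%Z.
  have hd' : d' * l%:Z = d := divzK hl.
  have nd' : ~~ (l%:Z %| d')%Z.
    apply/negP => h'; apply: (negP (sq l pl)); rewrite -hd'.
    by apply: dvdz_mulr; apply: dvdz_mul h' (dvdzz _).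
  have l_odd : odd l.
    by case: (even_prime pl) => // l2; move: hl; rewrite l2 (negbTE d_odd).
  have nl2 : ~~ (l%:Z %| 2)%Z.
    rewrite dvdzE /= dvdn_prime2 //; apply: contraL l_odd => /eqP -> //.
  have nf : ~~ (l%:Z %| f)%Z.
    by apply/negP => hf'; apply: (negP (sq l pl)); apply: dvdz_mul.
  have ne : ~~ (l%:Z %| e)%Z by rewrite he euclidz // negb_or nl2 nf.
  rewrite legendre1 //; split.
    move/point_dvd => [a [b hN]]; have [z [w h]] := hN (4 * a + 2 * b + 3)%N.
    rewrite -hd' (mulrC d') in h.
    have [x [s [ns hs]]] := @nec_l l a b d' e z w pl nd' ne h.
    have [y hy] := @QR_of l x s e pl ns hs.
    by split; [rewrite rpredN | exists y; rewrite opprK].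
  move=> [_ [x0 hx0]]; rewrite opprK in hx0.
  set c := d * l%:Z ^+ 4 - e.
  have nc : ~~ (l%:Z %| c)%Z.
    apply: contra ne => hc.
    have -> : e = d * l%:Z ^+ 4 - c by rewrite /c; ring.
    by rewrite rpredB // dvdz_mull // dvdT.
  have hx : (l%:Z %| x0 ^+ 2 - c)%Z.
    have -> : x0 ^+ 2 - c = (x0 ^+ 2 + e) - d * l%:Z ^+ 4 by rewrite /c; ring.
    by rewrite rpredB // dvdz_mull // dvdT.
  apply: (@suff_point l 1 2 d e 1 c (@hensel_odd l c x0 pl l_odd nc hx)).
  rewrite (_ : (4 * 1 + 2 * 2)%N = (4 + 4)%N) // exprD /c.
  change (l%:Z ^+ 4 * (d * l%:Z ^+ 4 - e) = d * (l%:Z ^+ 4 * l%:Z ^+ 4) - e * l%:Z ^+ 4 * 1 ^+ 4).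
  ring.
Qed.
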